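(* Define, for real $x$, \[ c(x)=\left(\frac{160}{\pi^{5}}-\frac{16}{\pi^{3}}\right)\left(\frac{\pi}{2}-x\right),\qquad d(x)=c(x)+\left(\frac{960}{\pi^{6}}-\frac{96}{\pi^{4}}\right)\left(\frac{\pi}{2}-x\right)^{2}. \] Then for every $x\in\left(\frac{\pi}{2}-\frac{1}{3},\frac{\pi}{2}\right)$, \[ 2+\left(\frac{16}{\pi^{4}}+c(x)\right)x^{3}\tan x<\left(\frac{\sin x}{x}\right)^{2}+\frac{\tan x}{x}, \] and for every $x\in\left(\frac{\pi}{2}-\frac{1}{2},\frac{\pi}{2}\right)$, \[ \left(\frac{\sin x}{x}\right)^{2}+\frac{\tan x}{x}<2+\left(\frac{16}{\pi^{4}}+d(x)\right)x^{3}\tan x. \] *)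

(* Defs.v *)
From Stdlib Require Import Reals.
Open Scope R_scope.

Definition c_fun (x : R) : R :=
  (160 / PI ^ 5 - 16 / PI ^ 3) * (PI / 2 - x).

Definition d_fun (x : R) : R :=
  c_fun x + (960 / PI ^ 6 - 96 / PI ^ 4) * (PI / 2 - x) ^ 2.

(* Main.v *)
Require Import Defs.
From Stdlib Require Import Reals Lra Lia.
Open Scope R_scope.

Lemma monb (i j : nat) (t p : R) : 0 <= t <= 1/2 -> 3 <= p <= 4 ->
  0 <= t^i * p^j <= (1/2)^i * 4^j.
Proof.
  intros Ht Hp. split.
  - apply Rmult_le_pos; apply pow_le; lra.
  - apply Rmult_le_compat; try (apply pow_le; lra); apply pow_incr; lra.
Qed.

Lemma powb (k : nat) (u h : R) : 0 <= u <= h -> 0 <= u^k <= h^k.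
Proof.
  intros Hu. split; [apply pow_le; lra | apply pow_incr; lra].
Qed.

Definition S1I (t : R) : R := (120) * t^1 + (-20) * t^3 + (1) * t^5.

Definition C1I (t : R) : R := (720) + (-360) * t^2 + (30) * t^4 + (-1) * t^6.

Definition S2I (t : R) : R := (6) * t^1 + (-1) * t^3.

Definition C2I (t : R) : R := (24) + (-12) * t^2 + (1) * t^4.

Definition Q1I (t p : R) : R := (1866240000) * p^4 + (-186624000) * p^6 + (-9953280000) * t^1 * p^3 + (1078272000) * t^1 * p^5 + (-10368000) * t^1 * p^7 + (22394880000) * t^2 * p^2 + (-3421440000) * t^2 * p^4 + (134784000) * t^2 * p^6 + (-23887872000) * t^3 * p^1 + (7464960000) * t^3 * p^3 + (-572313600) * t^3 * p^5 + (1036800) * t^3 * p^7 + (9953280000) * t^4 + (-12192768000) * t^4 * p^2 + (1321920000) * t^4 * p^4 + (-11923200) * t^4 * p^6 + (11943936000) * t^5 * p^1 + (-1658880000) * t^5 * p^3 + (44150400) * t^5 * p^5 + (-43200) * t^5 * p^7 + (-4976640000) * t^6 + (1430784000) * t^6 * p^2 + (-106272000) * t^6 * p^4 + (432000) * t^6 * p^6 + (-995328000) * t^7 * p^1 + (117504000) * t^7 * p^3 + (-900000) * t^7 * p^5 + (414720000) * t^8 + (-72576000) * t^8 * p^2 + (3456000) * t^8 * p^4 + (33177600) * t^9 * p^1 + (-3456000) * t^9 * p^3 + (-62640) * t^9 * p^5 + (-13824000) * t^10 + (1382400) * t^10 * p^2 + (2940) * t^11 * p^5 + (-80) * t^13 *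 p^5 + (1) * t^15 * p^5.

Definition Q1Z (t : R) : R := (237074027574377527469104839113705241600000000) + (-995652259045436668784812615845963041668992000) * t^1 + (1732922278718056368945716905084546214400000000) * t^2 + (-1559293744705600551950038662397739695833100800) * t^3 + (691949959693368627759951977165597834880000000) * t^4 + (-53225348922205987407332060544467512673620800) * t^5 + (-79189771228978786045569466534985428800000000) * t^6 + (24102325815048568993227526809000000000000000) * t^7 + (3506948225013468509433216000000000000000000) * t^8 + (-2209599638462423438214724134093600000000000) * t^9 + (-18028192467456000000000000000000000000000) * t^10 + (89969407356373129899350079090600000000000) * t^11 + (-2448147138948928704744219839200000000000) * t^13 + (30601839236861608809302747990000000000) * t^15.

Definition Q1RI (t p : R) : R := (754630704752617392686839591142400000000) + (240206616634448604906063360000000000000) * p^1 + (76460205384677378304000000000000000000) * p^2 + (24338059831065600000000000000000000000) * p^3 + (-586296092160000000000000000000000000000) * p^4 + (-186624000000000000000000000000000000000) * p^5 + (-3169262249515171199248828191603497088000) * t^1 + (-1008808358033725342660508911603200000000) * t^1 * p^1 + (-321113944860317655282996480000000000000) * t^1 * p^2 + (3066016270468037632128000000000000000000) * t^1 * p^3 + (975944114435059200000000000000000000000) * t^1 * p^4 + (-32572005120000000000000000000000000000) * t^1 * p^5 + (-10368000000000000000000000000000000000) * t^1 * p^6 + (5516067592263969419770615850841600000000) * t^2 + (1755820330553627118678954240000000000000) * t^2 * p^1 + (-6569622283444489217664000000000000000000) * t^2 * p^2 + (-2091177487655769600000000000000000000000) * t^2 * p^3 + (423436066560000000000000000000000000000)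 * t^2 * p^4 + (134784000000000000000000000000000000000) * t^2 * p^5 + (-4963390336439829996753359484839650291200) * t^3 + (6023854692547458453600450891160320000000) * t^3 * p^1 + (1917454121176683925528299648000000000000) * t^3 * p^2 + (-1765827456422803763212800000000000000000) * t^3 * p^3 + (-562080811443505920000000000000000000000) * t^3 * p^4 + (3257200512000000000000000000000000000) * t^3 * p^5 + (1036800000000000000000000000000000000) * t^3 * p^6 + (-965683110484281437870785248343680000000) * t^4 + (-307386740626332983575445952000000000000) * t^4 * p^1 + (3783237551486243276947200000000000000000) * t^4 * p^2 + (1204242931600318080000000000000000000000) * t^4 * p^3 + (-37457805888000000000000000000000000000) * t^4 * p^4 + (-11923200000000000000000000000000000000) * t^4 * p^5 + (-169421690679579408539408581465014571200) * t^5 + (-3855804764682717798484018787131680000000) * t^5 * p^1 + (-1227341812484352763563679152000000000000) * t^5 * p^2 + (137362987377616823467200000000000000000) * t^5 * p^3 + (43724033810146080000000000000000000000) * t^5 * p^4 + (-135716688000000000000000000000000000) * t^5 * p^5 + (-43200000000000000000000000000000000) * t^5 * p^6 + (1332045966440627879368187871316800000000) * t^6 + (424003758109946835636791520000000000000) * t^6 * p^1 + (-320468374896168234672000000000000000000) * t^6 * p^2 + (-102008338101460800000000000000000000000) * t^6 * p^3 + (1357166880000000000000000000000000000) * t^6 * p^4 + (432000000000000000000000000000000000) * t^6 * p^5 + (76720150672266492423351000000000000000) * t^7 + (341243813060350488900000000000000000000) * t^7 * p^1 + (108621371044710000000000000000000000000) * t^7 * p^2 + (-2827431000000000000000000000000000000)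 * t^7 * p^3 + (-900000000000000000000000000000000000) * t^7 * p^4 + (-120846615169345877376000000000000000000) * t^8 + (-38466704811686400000000000000000000000) * t^8 * p^1 + (10857335040000000000000000000000000000) * t^8 * p^2 + (3456000000000000000000000000000000000) * t^8 * p^3 + (-7033380035149155167334770400000000000) * t^9 + (-12799563289655605972560000000000000000) * t^9 * p^1 + (-4074230975288184000000000000000000000) * t^9 * p^2 + (-196789197600000000000000000000000000) * t^9 * p^3 + (-62640000000000000000000000000000000) * t^9 * p^4 + (4342934016000000000000000000000000000) * t^10 + (1382400000000000000000000000000000000) * t^10 * p^1 + (286381760052626631417053400000000000) * t^11 + (91158222445521736260000000000000000) * t^11 * p^1 + (29016587920614000000000000000000000) * t^11 * p^2 + (9236274600000000000000000000000000) * t^11 * p^3 + (2940000000000000000000000000000000) * t^11 * p^4 + (-7792700953812969562368800000000000) * t^13 + (-2480495848857734320000000000000000) * t^13 * p^1 + (-789567018248000000000000000000000) * t^13 * p^2 + (-251327200000000000000000000000000) * t^13 * p^3 + (-80000000000000000000000000000000) * t^13 * p^4 + (97408761922662119529610000000000) * t^15 + (31006198110721679000000000000000) * t^15 * p^1 + (9869587728100000000000000000000) * t^15 * p^2 + (3141590000000000000000000000000) * t^15 * p^3 + (1000000000000000000000000000000) * t^15 * p^4.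

Lemma Q1_split t p : 100000^7 * Q1I t p = Q1Z t + (100000*p - 314159) * Q1RI t p.
Proof. unfold Q1I, Q1Z, Q1RI. ring. Qed.

Lemma Q1_Rbnd t p : 0 <= t <= 1/2 -> 3 <= p <= 4 -> -789919206142031723374788800090441279809677 <= Q1RI t p <= 789919206142031723374788800090441279809677.
Proof. intros Ht Hp. pose proof (monb 0 0 t p Ht Hp). pose proof (monb 0 1 t p Ht Hp). pose proof (monb 0 2 t p Ht Hp). pose proof (monb 0 3 t p Ht Hp). pose proof (monb 0 4 t p Ht Hp). pose proof (monb 0 5 t p Ht Hp). pose proof (monb 1 0 t p Ht Hp). pose proof (monb 1 1 t p Ht Hp). pose proof (monb 1 2 t p Ht Hp). pose proof (monb 1 3 t p Ht Hp). pose proof (monb 1 4 t p Ht Hp). pose proof (monb 1 5 t p Ht Hp). pose proof (monb 1 6 t p Ht Hp). pose proof (monb 2 0 t p Ht Hp). pose proof (monb 2 1 t p Ht Hp). pose proof (monb 2 2 t p Ht Hp). pose proof (monb 2 3 t p Ht Hp). pose proof (monb 2 4 t p Ht Hp). pose proof (monb 2 5 t p Ht Hp). pose proof (monb 3 0 t p Ht Hp). pose proof (monb 3 1 t p Ht Hp). pose proof (monb 3 2 t p Ht Hp). pose proof (monb 3 3 t p Ht Hp). pose proof (monb 3 4 t p Ht Hp). pose proof (monb 3 5 t p Ht Hp). pose proof (monb 3 6 t p Ht Hp). pose proof (monb 4 0 t p Ht Hp). pose proof (monb 4 1 t p Ht Hp). pose proof (monb 4 2 t p Ht Hp). pose proof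 (monb 4 3 t p Ht Hp). pose proof (monb 4 4 t p Ht Hp). pose proof (monb 4 5 t p Ht Hp). pose proof (monb 5 0 t p Ht Hp). pose proof (monb 5 1 t p Ht Hp). pose proof (monb 5 2 t p Ht Hp). pose proof (monb 5 3 t p Ht Hp). pose proof (monb 5 4 t p Ht Hp). pose proof (monb 5 5 t p Ht Hp). pose proof (monb 5 6 t p Ht Hp). pose proof (monb 6 0 t p Ht Hp). pose proof (monb 6 1 t p Ht Hp). pose proof (monb 6 2 t p Ht Hp). pose proof (monb 6 3 t p Ht Hp). pose proof (monb 6 4 t p Ht Hp). pose proof (monb 6 5 t p Ht Hp). pose proof (monb 7 0 t p Ht Hp). pose proof (monb 7 1 t p Ht Hp). pose proof (monb 7 2 t p Ht Hp). pose proof (monb 7 3 t p Ht Hp). pose proof (monb 7 4 t p Ht Hp). pose proof (monb 8 0 t p Ht Hp). pose proof (monb 8 1 t p Ht Hp). pose proof (monb 8 2 t p Ht Hp). pose proof (monb 8 3 t p Ht Hp). pose proof (monb 9 0 t p Ht Hp). pose proof (monb 9 1 t p Ht Hp). pose proof (monb 9 2 t p Ht Hp). pose proof (monb 9 3 t p Ht Hp). pose proof (monb 9 4 t p Ht Hp). pose proof (monb 10 0 t p Ht Hp). pose proof (monb 10 1 t p Ht Hp). pose proof (monb 11 0 t p Ht Hp). pose proof (monb 11 1 t p Ht Hp). pose proof (monb 11 2 t p Ht Hp). pose proof (monb 11 3 t p Ht Hp). pose proof (monb 11 4 t p Ht Hp). pose proof (monb 13 0 t p Ht Hp). pose proof (monb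 13 1 t p Ht Hp). pose proof (monb 13 2 t p Ht Hp). pose proof (monb 13 3 t p Ht Hp). pose proof (monb 13 4 t p Ht Hp). pose proof (monb 15 0 t p Ht Hp). pose proof (monb 15 1 t p Ht Hp). pose proof (monb 15 2 t p Ht Hp). pose proof (monb 15 3 t p Ht Hp). pose proof (monb 15 4 t p Ht Hp). unfold Q1RI. split; lra. Qed.

Definition Q1W0 (w : R) : R := (111468647998428896445862075095204460531906353561600000000) + (-78023457010389699432628656740764057656500174802911232000) * w^1 + (22633167635846002969040013011067772716489533030400000000) * w^2 + (-3394243080110444801756694514824467176215506625547468800) * w^3 + (251037408276072800874070452017058118974438113280000000) * w^4 + (-3218333315591517542825524063324428447605385850060800) * w^5 + (-798050440755194596216291230621756515876044800000000) * w^6 + (40482652076168617258128845668825344000000000000000) * w^7 + (981721058317370320656696754176000000000000000000) * w^8 + (-103091080732102827933346169200271001600000000000) * w^9 + (-140187224626937856000000000000000000000000000) * w^10 + (116600351933859576349557702501417600000000000) * w^11 + (0) * w^12 + (-88133297002161433370791914211200000000000) * w^13 + (0) * w^14 + (30601839236861608809302747990000000000) * w^15.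

Lemma Q1_shift0 t : 6^15 * Q1Z t = Q1W0 (6*t - 0).
Proof. unfold Q1Z, Q1W0. ring. Qed.

Lemma Q1_piece0 w : 0 <= w <= 1 -> Q1W0 w > 6^15 * 236975761842609517012436640027132383942905.
Proof. intros Hw. pose proof (powb 1 w 1 Hw). pose proof (powb 2 w 1 Hw). pose proof (powb 3 w 1 Hw). pose proof (powb 4 w 1 Hw). pose proof (powb 5 w 1 Hw). pose proof (powb 6 w 1 Hw). pose proof (powb 7 w 1 Hw). pose proof (powb 8 w 1 Hw). pose proof (powb 9 w 1 Hw). pose proof (powb 10 w 1 Hw). pose proof (powb 11 w 1 Hw). pose proof (powb 12 w 1 Hw). pose proof (powb 13 w 1 Hw). pose proof (powb 14 w 1 Hw). pose proof (powb 15 w 1 Hw). rewrite !pow1 in *. unfold Q1W0. lra. Qed.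

Definition Q1W1 (w : R) : R := (52931177929552860047748275135380869870654114636171238400) + (-41956291010754365970086299833220395002462105913683942400) * w^1 + (13913382668105911410449470520301897165001423052936985600) * w^2 + (-2436774577034623573160026908698501536815627076928076800) * w^3 + (224447617883188597457582666584941906949875262029696000) * w^4 + (-7114494934583284839834300128391315247732484650060800) * w^5 + (-495819058408778208131416696565682749808494800000000) * w^6 + (44646646245719998915442100061787452646850000000000) * w^7 + (66718734058913203273962730955888390850000000000) * w^8 + (-98142795767161094726628521221100351650000000000) * w^9 + (1117302421026127609312342576203404370000000000) * w^10 + (109767726278249300642660631443950350000000000) * w^11 + (-1131809024175326601812062134410150000000000) * w^12 + (-84920103882290964445815125672250000000000) * w^13 + (459027588552924132139541219850000000000) * w^14 + (30601839236861608809302747990000000000) * w^15.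

Lemma Q1_shift1 t : 6^15 * Q1Z t = Q1W1 (6*t - 1).
Proof. unfold Q1Z, Q1W1. ring. Qed.

Lemma Q1_piece1 w : 0 <= w <= 1 -> Q1W1 w > 6^15 * 236975761842609517012436640027132383942905.
Proof. intros Hw. pose proof (powb 1 w 1 Hw). pose proof (powb 2 w 1 Hw). pose proof (powb 3 w 1 Hw). pose proof (powb 4 w 1 Hw). pose proof (powb 5 w 1 Hw). pose proof (powb 6 w 1 Hw). pose proof (powb 7 w 1 Hw). pose proof (powb 8 w 1 Hw). pose proof (powb 9 w 1 Hw). pose proof (powb 10 w 1 Hw). pose proof (powb 11 w 1 Hw). pose proof (powb 12 w 1 Hw). pose proof (powb 13 w 1 Hw). pose proof (powb 14 w 1 Hw). pose proof (powb 15 w 1 Hw). rewrite !pow1 in *. unfold Q1W1. lra. Qed.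

Lemma Q1Z_pos t : 0 <= t <= (1/3) -> Q1Z t > 236975761842609517012436640027132383942905.
Proof. intros Ht.
  destruct (Rle_lt_dec t (1/6)) as [Hk0|Hk0].
  { pose proof (Q1_shift0 t) as E. pose proof (Q1_piece0 (6*t - 0) ltac:(lra)) as P. lra. }
  pose proof (Q1_shift1 t) as E. pose proof (Q1_piece1 (6*t - 1) ltac:(lra)) as P. lra.
Qed.

Lemma Q1_pos t p : 0 <= t <= (1/3) -> 31415926535/10000000000 <= p <= 31415926536/10000000000 -> Q1I t p > 0.
Proof. intros Ht Hp. pose proof (Q1_split t p) as E.
  pose proof (Q1Z_pos t Ht) as H0.
  assert (HR : -789919206142031723374788800090441279809677 <= Q1RI t p <= 789919206142031723374788800090441279809677) by (apply Q1_Rbnd; lra).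
  assert (He : -(3/10) <= 100000*p - 314159 <= 3/10) by lra.
  set (e := 100000*p - 314159) in *. set (r := Q1RI t p) in *.
  assert (H1 : 0 <= (e + 3/10) * (r + 789919206142031723374788800090441279809677)) by (apply Rmult_le_pos; lra).
  assert (H2 : 0 <= (3/10 - e) * (789919206142031723374788800090441279809677 - r)) by (apply Rmult_le_pos; lra).
  assert (Hpos : 0 < 100000^7) by (apply pow_lt; lra).
  set (z := 100000^7) in *. set (q := Q1I t p) in *. nra.
Qed.

Definition Q2I (t p : R) : R := (-967680) * p^4 + (87552) * p^6 + (1152) * p^8 + (5806080) * t^1 * p^3 + (-552960) * t^1 * p^5 + (-4608) * t^1 * p^7 + (-13934592) * t^2 * p^2 + (1866240) * t^2 * p^4 + (-40032) * t^2 * p^6 + (-144) * t^2 * p^8 + (15482880) * t^3 * p^1 + (-4451328) * t^3 * p^3 + (276480) * t^3 * p^5 + (576) * t^3 * p^7 + (-6635520) * t^4 + (7630848) * t^4 * p^2 + (-731520) * t^4 * p^4 + (3552) * t^4 * p^6 + (-7741440) * t^5 * p^1 + (1016064) * t^5 * p^3 + (-23040) * t^5 * p^5 + (3317760) * t^6 + (-912384) * t^6 * p^2 + (57600) * t^6 * p^4 + (-60) * t^6 * p^6 + (645120) * t^7 * p^1 + (-64512) * t^7 * p^3 + (-276480) * t^8 + (27648) * t^8 * p^2 + (2) * t^8 * p^6.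

Definition Q2Z (t : R) : R := (8413232275008645662184789718649629067520984192) + (-31088924219234260951440543811450801851955200000) * t^1 + (44069732682346466180624677820737350286559876976) * t^2 + (-30302531094684838998088149702928649768505600000) * t^3 + (8361833633218859504142955604567536320000000000) * t^4 + (1331874273993973817926468631040000000000000000) * t^5 + (-1340323022463315520659944520347424600000000000) * t^6 + (264306882811230443520000000000000000000000000) * t^7 + (-16828698509285587676156515988419180000000000) * t^8.

Definition Q2RI (t p : R) : R := (26780172699202141788663669411507004629888) + (8524400924118723890979939906705523200000) * p^1 + (2713403379855017329116765684480000000000) * p^2 + (863703850551796169811072000000000000000) * p^3 + (31077162790355137420800000000000000000000) * p^4 + (9892176506277120000000000000000000000000) * p^5 + (361911168000000000000000000000000000000) * p^6 + (115200000000000000000000000000000000000) * p^7 + (-98959202885272301450668431626822092800000) * t^1 + (-31499719213924255377267062737920000000000) * t^1 * p^1 + (-10026680506980304679244288000000000000000) * t^1 * p^2 + (-188005016729420549683200000000000000000000) * t^1 * p^3 + (-59843906025108480000000000000000000000000) * t^1 * p^4 + (-1447644672000000000000000000000000000000) * t^1 * p^5 + (-460800000000000000000000000000000000000) * t^1 * p^6 + (140278434430802447743418707790441624421264) * t^2 + (44652050213682386225897939511661809600000) * t^2 * p^1 + (457765415033050902958660404289440000000000) * t^2 * p^2 + (145711380235183745478773616000000000000000) * t^2 * p^3 + (-13022902340794392177600000000000000000000) * t^2 * p^4 + (-4145322063284640000000000000000000000000) * t^2 * p^5 + (-45238896000000000000000000000000000000) * t^2 * p^6 + (-14400000000000000000000000000000000000)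 * t^2 * p^7 + (-96456033711225331752673486046647238400000) * t^3 + (-523538728386334732333841617157760000000000) * t^3 * p^1 + (-166647693806745861915094464000000000000000) * t^3 * p^2 + (88644637331177568710400000000000000000000) * t^3 * p^3 + (28216488253138560000000000000000000000000) * t^3 * p^4 + (180955584000000000000000000000000000000) * t^3 * p^5 + (57600000000000000000000000000000000000) * t^3 * p^6 + (237831905605820172282643360860480000000000) * t^4 + (75704310748958384856917472000000000000000) * t^4 * p^1 + (-218800190111071659619200000000000000000000) * t^4 * p^2 + (-69646322438978880000000000000000000000000) * t^4 * p^3 + (1115892768000000000000000000000000000000) * t^4 * p^4 + (355200000000000000000000000000000000000) * t^4 * p^5 + (4239491066606316603778560000000000000000) * t^5 + (247767369728897251584000000000000000000000) * t^5 * p^1 + (78866869874457600000000000000000000000000) * t^5 * p^2 + (-7238223360000000000000000000000000000000) * t^5 * p^3 + (-2304000000000000000000000000000000000000) * t^5 * p^4 + (-109874054292454825488558164879400000000000) * t^6 + (-34974027257679972717177660000000000000000) * t^6 * p^1 + (17909521211335669926000000000000000000000) * t^6 * p^2 + (5700782473631400000000000000000000000000) * t^6 * p^3 + (-18849540000000000000000000000000000000) * t^6 * p^4 + (-6000000000000000000000000000000000000) * t^6 * p^5 + (841315648481280000000000000000000000000) * t^7 + (-20267025408000000000000000000000000000000) * t^7 * p^1 + (-6451200000000000000000000000000000000000) * t^7 * p^2 + (8747071710473723217618605495980000000000) * t^8 + (2784281752384532423905922000000000000000) * t^8 * p^1 + (6201239622144335800000000000000000000) * t^8 * p^2 + (1973917545620000000000000000000000000)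 * t^8 * p^3 + (628318000000000000000000000000000000) * t^8 * p^4 + (200000000000000000000000000000000000) * t^8 * p^5.

Lemma Q2_split t p : 100000^8 * Q2I t p = Q2Z t + (100000*p - 314159) * Q2RI t p.
Proof. unfold Q2I, Q2Z, Q2RI. ring. Qed.

Lemma Q2_Rbnd t p : 0 <= t <= 1/2 -> 3 <= p <= 4 -> -46373509666094450119348923781069992561210205 <= Q2RI t p <= 46373509666094450119348923781069992561210205.
Proof. intros Ht Hp. pose proof (monb 0 0 t p Ht Hp). pose proof (monb 0 1 t p Ht Hp). pose proof (monb 0 2 t p Ht Hp). pose proof (monb 0 3 t p Ht Hp). pose proof (monb 0 4 t p Ht Hp). pose proof (monb 0 5 t p Ht Hp). pose proof (monb 0 6 t p Ht Hp). pose proof (monb 0 7 t p Ht Hp). pose proof (monb 1 0 t p Ht Hp). pose proof (monb 1 1 t p Ht Hp). pose proof (monb 1 2 t p Ht Hp). pose proof (monb 1 3 t p Ht Hp). pose proof (monb 1 4 t p Ht Hp). pose proof (monb 1 5 t p Ht Hp). pose proof (monb 1 6 t p Ht Hp). pose proof (monb 2 0 t p Ht Hp). pose proof (monb 2 1 t p Ht Hp). pose proof (monb 2 2 t p Ht Hp). pose proof (monb 2 3 t p Ht Hp). pose proof (monb 2 4 t p Ht Hp). pose proof (monb 2 5 t p Ht Hp). pose proof (monb 2 6 t p Ht Hp). pose proof (monb 2 7 t p Ht Hp). pose proof (monb 3 0 t p Ht Hp). pose proof (monb 3 1 t p Ht Hp). pose proof (monb 3 2 t p Ht Hp). pose proof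 (monb 3 3 t p Ht Hp). pose proof (monb 3 4 t p Ht Hp). pose proof (monb 3 5 t p Ht Hp). pose proof (monb 3 6 t p Ht Hp). pose proof (monb 4 0 t p Ht Hp). pose proof (monb 4 1 t p Ht Hp). pose proof (monb 4 2 t p Ht Hp). pose proof (monb 4 3 t p Ht Hp). pose proof (monb 4 4 t p Ht Hp). pose proof (monb 4 5 t p Ht Hp). pose proof (monb 5 0 t p Ht Hp). pose proof (monb 5 1 t p Ht Hp). pose proof (monb 5 2 t p Ht Hp). pose proof (monb 5 3 t p Ht Hp). pose proof (monb 5 4 t p Ht Hp). pose proof (monb 6 0 t p Ht Hp). pose proof (monb 6 1 t p Ht Hp). pose proof (monb 6 2 t p Ht Hp). pose proof (monb 6 3 t p Ht Hp). pose proof (monb 6 4 t p Ht Hp). pose proof (monb 6 5 t p Ht Hp). pose proof (monb 7 0 t p Ht Hp). pose proof (monb 7 1 t p Ht Hp). pose proof (monb 7 2 t p Ht Hp). pose proof (monb 8 0 t p Ht Hp). pose proof (monb 8 1 t p Ht Hp). pose proof (monb 8 2 t p Ht Hp). pose proof (monb 8 3 t p Ht Hp). pose proof (monb 8 4 t p Ht Hp). pose proof (monb 8 5 t p Ht Hp). unfold Q2RI. split; lra. Qed.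

Definition Q2W0 (w : R) : R := (14130999540820921392536167768079415375873325384630272) + (-8702909090235562073702460072402291667228930867200000) * w^1 + (2056117448027556726123224968404321814969737620192256) * w^2 + (-235632481792269308049133452089973180599899545600000) * w^3 + (10836936388651641917369270463519527070720000000000) * w^4 + (287684843182698344672117224304640000000000000000) * w^5 + (-48251628808679358743758002732507285600000000000) * w^6 + (1585841296867382661120000000000000000000000000) * w^7 + (-16828698509285587676156515988419180000000000) * w^8.

Lemma Q2_shift0 t : 6^8 * Q2Z t = Q2W0 (6*t - 0).
Proof. unfold Q2Z, Q2W0. ring. Qed.

Lemma Q2_piece0 w : 0 <= w <= 1 -> Q2W0 w > 6^8 * 13912052899828335035804677134320997768363063.
Proof. intros Hw. pose proof (powb 1 w 1 Hw). pose proof (powb 2 w 1 Hw). pose proof (powb 3 w 1 Hw). pose proof (powb 4 w 1 Hw). pose proof (powb 5 w 1 Hw). pose proof (powb 6 w 1 Hw). pose proof (powb 7 w 1 Hw). pose proof (powb 8 w 1 Hw). rewrite !pow1 in *. unfold Q2W0. lra. Qed.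

Definition Q2W1 (w : R) : R := (7259653355436270755908170285520048014380172592022528) + (-5253064013300098564969108941156489221873314263615488) * w^1 + (1416427526446031401585033624735130550573318983392256) * w^2 + (-190318358343735505707581022812394169503099545600000) * w^3 + (11605912608929651661575355587935928444120000000000) * w^4 + (30535330448317235183224443014244812320000000000) * w^5 + (-37621943288867676570850385180183022640000000000) * w^6 + (1451211708793097959710747872092646560000000000) * w^7 + (-16828698509285587676156515988419180000000000) * w^8.

Lemma Q2_shift1 t : 6^8 * Q2Z t = Q2W1 (6*t - 1).
Proof. unfold Q2Z, Q2W1. ring. Qed.

Lemma Q2_piece1 w : 0 <= w <= 1 -> Q2W1 w > 6^8 * 13912052899828335035804677134320997768363063.
Proof. intros Hw. pose proof (powb 1 w 1 Hw). pose proof (powb 2 w 1 Hw). pose proof (powb 3 w 1 Hw). pose proof (powb 4 w 1 Hw). pose proof (powb 5 w 1 Hw). pose proof (powb 6 w 1 Hw). pose proof (powb 7 w 1 Hw). pose proof (powb 8 w 1 Hw). rewrite !pow1 in *. unfold Q2W1. lra. Qed.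

Definition Q2W2 (w : R) : R := (3244298770617567471849073710523421268038257766199296) + (-2944803416158641814757975751884700048361254933630976) * w^1 + (914878955465879346695711171800869585353060346592256) * w^2 + (-144291943466619841805184352323483776900699545600000) * w^3 + (11243874512750331126381267244708460453120000000000) * w^4 + (-165663290516753759997816927648259219840000000000) * w^5 + (-27934664885575987307807532523210233760000000000) * w^6 + (1316582120718813258301495744185293120000000000) * w^7 + (-16828698509285587676156515988419180000000000) * w^8.

Lemma Q2_shift2 t : 6^8 * Q2Z t = Q2W2 (6*t - 2).
Proof. unfold Q2Z, Q2W2. ring. Qed.

Lemma Q2_piece2 w : 0 <= w <= 1 -> Q2W2 w > 6^8 * 13912052899828335035804677134320997768363063.
Proof. intros Hw. pose proof (powb 1 w 1 Hw). pose proof (powb 2 w 1 Hw). pose proof (powb 3 w 1 Hw). pose proof (powb 4 w 1 Hw). pose proof (powb 5 w 1 Hw). pose proof (powb 6 w 1 Hw). pose proof (powb 7 w 1 Hw). pose proof (powb 8 w 1 Hw). rewrite !pow1 in *. unfold Q2W2. lra. Qed.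

Lemma Q2Z_pos t : 0 <= t <= (1/2) -> Q2Z t > 13912052899828335035804677134320997768363063.
Proof. intros Ht.
  destruct (Rle_lt_dec t (1/6)) as [Hk0|Hk0].
  { pose proof (Q2_shift0 t) as E. pose proof (Q2_piece0 (6*t - 0) ltac:(lra)) as P. lra. }
  destruct (Rle_lt_dec t (2/6)) as [Hk1|Hk1].
  { pose proof (Q2_shift1 t) as E. pose proof (Q2_piece1 (6*t - 1) ltac:(lra)) as P. lra. }
  pose proof (Q2_shift2 t) as E. pose proof (Q2_piece2 (6*t - 2) ltac:(lra)) as P. lra.
Qed.

Lemma Q2_pos t p : 0 <= t <= (1/2) -> 31415926535/10000000000 <= p <= 31415926536/10000000000 -> Q2I t p > 0.
Proof. intros Ht Hp. pose proof (Q2_split t p) as E.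
  pose proof (Q2Z_pos t Ht) as H0.
  assert (HR : -46373509666094450119348923781069992561210205 <= Q2RI t p <= 46373509666094450119348923781069992561210205) by (apply Q2_Rbnd; lra).
  assert (He : -(3/10) <= 100000*p - 314159 <= 3/10) by lra.
  set (e := 100000*p - 314159) in *. set (r := Q2RI t p) in *.
  assert (H1 : 0 <= (e + 3/10) * (r + 46373509666094450119348923781069992561210205)) by (apply Rmult_le_pos; lra).
  assert (H2 : 0 <= (3/10 - e) * (46373509666094450119348923781069992561210205 - r)) by (apply Rmult_le_pos; lra).
  assert (Hpos : 0 < 100000^8) by (apply pow_lt; lra).
  set (z := 100000^8) in *. set (q := Q2I t p) in *. nra.
Qed.

Definition V1I (t p : R) : R := (-32) * p^4 + (16) * p^6 + (896) * t^1 * p^3 + (-128) * t^1 * p^5 + (-3328) * t^2 * p^2 + (384) * t^2 * p^4 + (4864) * t^3 * p^1 + (-512) * t^3 * p^3 + (-2560) * t^4 + (256) * t^4 * p^2.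

Definition V1Z (t : R) : R := (12265068758975942034127267209264656) + (-11388800715976234891907517427200000) * t^1 + (4558976619185453899370240000000000) * t^2 + (-594479672689499648000000000000000) * t^3 + (-33385541606400000000000000000000) * t^4.

Definition V1RI (t p : R) : R := (39040959383547636814884396784) + (12427133834633939124737600000) * p^1 + (3955682897715468640000000000) * p^2 + (1259134036496000000000000000) * p^3 + (502654400000000000000000000) * p^4 + (160000000000000000000000000) * p^5 + (-36251709217231512997900800000) * t^1 + (-11539287181723749120000000000) * t^1 * p^1 + (-3673072291968000000000000000) * t^1 * p^2 + (-4021235200000000000000000000) * t^1 * p^3 + (-1280000000000000000000000000) * t^1 * p^4 + (14511685545171247360000000000) * t^2 + (4619216875904000000000000000) * t^2 * p^1 + (12063705600000000000000000000) * t^2 * p^2 + (3840000000000000000000000000) * t^2 * p^3 + (-1892289167872000000000000000) * t^3 + (-16084940800000000000000000000) * t^3 * p^1 + (-5120000000000000000000000000) * t^3 * p^2 + (8042470400000000000000000000) * t^4 + (2560000000000000000000000000) * t^4 * p^1.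

Lemma V1_split t p : 100000^6 * V1I t p = V1Z t + (100000*p - 314159) * V1RI t p.
Proof. unfold V1I, V1Z, V1RI. ring. Qed.

Lemma V1_Rbnd t p : 0 <= t <= 1/2 -> 3 <= p <= 4 -> -1025856681137262958132785196785 <= V1RI t p <= 1025856681137262958132785196785.
Proof. intros Ht Hp. pose proof (monb 0 0 t p Ht Hp). pose proof (monb 0 1 t p Ht Hp). pose proof (monb 0 2 t p Ht Hp). pose proof (monb 0 3 t p Ht Hp). pose proof (monb 0 4 t p Ht Hp). pose proof (monb 0 5 t p Ht Hp). pose proof (monb 1 0 t p Ht Hp). pose proof (monb 1 1 t p Ht Hp). pose proof (monb 1 2 t p Ht Hp). pose proof (monb 1 3 t p Ht Hp). pose proof (monb 1 4 t p Ht Hp). pose proof (monb 2 0 t p Ht Hp). pose proof (monb 2 1 t p Ht Hp). pose proof (monb 2 2 t p Ht Hp). pose proof (monb 2 3 t p Ht Hp). pose proof (monb 3 0 t p Ht Hp). pose proof (monb 3 1 t p Ht Hp). pose proof (monb 3 2 t p Ht Hp). pose proof (monb 4 0 t p Ht Hp). pose proof (monb 4 1 t p Ht Hp). unfold V1RI. split; lra. Qed.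

Definition V1W0 (w : R) : R := (15895529111632820876228938303206994176) + (-2459980954650866736652023764275200000) * w^1 + (164123158290676340377328640000000000) * w^2 + (-3566878036136997888000000000000000) * w^3 + (-33385541606400000000000000000000) * w^4.

Lemma V1_shift0 t : 6^4 * V1Z t = V1W0 (6*t - 0).
Proof. unfold V1Z, V1W0. ring. Qed.

Lemma V1_piece0 w : 0 <= w <= 1 -> V1W0 w > 6^4 * 307757004341178887439835559037.
Proof. intros Hw. pose proof (powb 1 w 1 Hw). pose proof (powb 2 w 1 Hw). pose proof (powb 3 w 1 Hw). pose proof (powb 4 w 1 Hw). rewrite !pow1 in *. unfold V1W0. lra. Qed.

Definition V1W1 (w : R) : R := (13596071051694887082066243178931794176) + (-2142568814344350649561366484275200000) * w^1 + (153222210932626946713328640000000000) * w^2 + (-3700420202562597888000000000000000) * w^3 + (-33385541606400000000000000000000) * w^4.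

Lemma V1_shift1 t : 6^4 * V1Z t = V1W1 (6*t - 1).
Proof. unfold V1Z, V1W1. ring. Qed.

Lemma V1_piece1 w : 0 <= w <= 1 -> V1W1 w > 6^4 * 307757004341178887439835559037.
Proof. intros Hw. pose proof (powb 1 w 1 Hw). pose proof (powb 2 w 1 Hw). pose proof (powb 3 w 1 Hw). pose proof (powb 4 w 1 Hw). rewrite !pow1 in *. unfold V1W1. lra. Qed.

Lemma V1Z_pos t : 0 <= t <= (1/3) -> V1Z t > 307757004341178887439835559037.
Proof. intros Ht.
  destruct (Rle_lt_dec t (1/6)) as [Hk0|Hk0].
  { pose proof (V1_shift0 t) as E. pose proof (V1_piece0 (6*t - 0) ltac:(lra)) as P. lra. }
  pose proof (V1_shift1 t) as E. pose proof (V1_piece1 (6*t - 1) ltac:(lra)) as P. lra.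
Qed.

Lemma V1_pos t p : 0 <= t <= (1/3) -> 31415926535/10000000000 <= p <= 31415926536/10000000000 -> V1I t p > 0.
Proof. intros Ht Hp. pose proof (V1_split t p) as E.
  pose proof (V1Z_pos t Ht) as H0.
  assert (HR : -1025856681137262958132785196785 <= V1RI t p <= 1025856681137262958132785196785) by (apply V1_Rbnd; lra).
  assert (He : -(3/10) <= 100000*p - 314159 <= 3/10) by lra.
  set (e := 100000*p - 314159) in *. set (r := V1RI t p) in *.
  assert (H1 : 0 <= (e + 3/10) * (r + 1025856681137262958132785196785)) by (apply Rmult_le_pos; lra).
  assert (H2 : 0 <= (3/10 - e) * (1025856681137262958132785196785 - r)) by (apply Rmult_le_pos; lra).
  assert (Hpos : 0 < 100000^6) by (apply pow_lt; lra).
  set (z := 100000^6) in *. set (q := V1I t p) in *. nra.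
Qed.

Definition V2I (t p : R) : R := (-32) * p^5 + (16) * p^7 + (-64) * t^1 * p^4 + (-32) * t^1 * p^6 + (4352) * t^2 * p^3 + (-384) * t^2 * p^5 + (-18176) * t^3 * p^2 + (1792) * t^3 * p^4 + (28160) * t^4 * p^1 + (-2816) * t^4 * p^3 + (-15360) * t^5 + (1536) * t^5 * p^2.

Definition V2Z (t : R) : R := (3853181736251122973499388139195375064304) + (-3699845904405263536804461441852931200000) * t^1 + (1742791150831216918027744771840000000000) * t^2 + (-483312518053508180293888000000000000000) * t^3 + (115372052020775193600000000000000000000) * t^4 + (-20031324963840000000000000000000000000) * t^5.

Definition V2RI (t p : R) : R := (12265068758975942034127267209264656) + (3904095938354763681488439678400000) * p^1 + (1242713383463393912473760000000000) * p^2 + (395568289771546864000000000000000) * p^3 + (125913403649600000000000000000000) * p^4 + (50265440000000000000000000000000) * p^5 + (16000000000000000000000000000000) * p^6 + (-11776985234881902274976879356800000) * t^1 + (-3748733996123587824947520000000000) * t^1 * p^1 + (-1193260099543093728000000000000000) * t^1 * p^2 + (-379826807299200000000000000000000) * t^1 * p^3 + (-100530880000000000000000000000000) * t^1 * p^4 + (-32000000000000000000000000000000) * t^1 * p^5 + (5547481214388946100629760000000000) * t^2 + (1765819605482875264000000000000000) * t^2 * p^1 + (562078312409600000000000000000000) * t^2 * p^2 + (-1206370560000000000000000000000000) * t^2 * p^3 + (-384000000000000000000000000000000) * t^2 * p^4 + (-1538432825586751232000000000000000) * t^3 + (-489698791244800000000000000000000) * t^3 * p^1 + (5629729280000000000000000000000000)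 * t^3 * p^2 + (1792000000000000000000000000000000) * t^3 * p^3 + (367240957670400000000000000000000) * t^4 + (-8846717440000000000000000000000000) * t^4 * p^1 + (-2816000000000000000000000000000000) * t^4 * p^2 + (4825482240000000000000000000000000) * t^5 + (1536000000000000000000000000000000) * t^5 * p^1.

Lemma V2_split t p : 100000^7 * V2I t p = V2Z t + (100000*p - 314159) * V2RI t p.
Proof. unfold V2I, V2Z, V2RI. ring. Qed.

Lemma V2_Rbnd t p : 0 <= t <= 1/2 -> 3 <= p <= 4 -> -367366303384486830960202105601264657 <= V2RI t p <= 367366303384486830960202105601264657.
Proof. intros Ht Hp. pose proof (monb 0 0 t p Ht Hp). pose proof (monb 0 1 t p Ht Hp). pose proof (monb 0 2 t p Ht Hp). pose proof (monb 0 3 t p Ht Hp). pose proof (monb 0 4 t p Ht Hp). pose proof (monb 0 5 t p Ht Hp). pose proof (monb 0 6 t p Ht Hp). pose proof (monb 1 0 t p Ht Hp). pose proof (monb 1 1 t p Ht Hp). pose proof (monb 1 2 t p Ht Hp). pose proof (monb 1 3 t p Ht Hp). pose proof (monb 1 4 t p Ht Hp). pose proof (monb 1 5 t p Ht Hp). pose proof (monb 2 0 t p Ht Hp). pose proof (monb 2 1 t p Ht Hp). pose proof (monb 2 2 t p Ht Hp). pose proof (monb 2 3 t p Ht Hp). pose proof (monb 2 4 t p Ht Hp). pose proof (monb 3 0 t p Ht Hp). pose proof (monb 3 1 t p Ht Hp). pose proof (monb 3 2 t p Ht Hp). pose proof (monb 3 3 t p Ht Hp). pose proof (monb 4 0 t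 p Ht Hp). pose proof (monb 4 1 t p Ht Hp). pose proof (monb 4 2 t p Ht Hp). pose proof (monb 5 0 t p Ht Hp). pose proof (monb 5 1 t p Ht Hp). unfold V2RI. split; lra. Qed.

Definition V2W0 (w : R) : R := (29962341181088732241931242170383236500027904) + (-4795000292109221543698582028641398835200000) * w^1 + (376442888579542854293992870717440000000000) * w^2 + (-17399250649926294490579968000000000000000) * w^3 + (692232312124651161600000000000000000000) * w^4 + (-20031324963840000000000000000000000000) * w^5.

Lemma V2_shift0 t : 6^5 * V2Z t = V2W0 (6*t - 0).
Proof. unfold V2Z, V2W0. ring. Qed.

Lemma V2_piece0 w : 0 <= w <= 1 -> V2W0 w > 6^5 * 110209891015346049288060631680379399.
Proof. intros Hw. pose proof (powb 1 w 1 Hw). pose proof (powb 2 w 1 Hw). pose proof (powb 3 w 1 Hw). pose proof (powb 4 w 1 Hw). pose proof (powb 5 w 1 Hw). rewrite !pow1 in *. unfold V2W0. lra. Qed.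

Definition V2W1 (w : R) : R := (25527056727896288069197673044459277664827904) + (-4091643494276235313935936191206518835200000) * w^1 + (328198217252873477791852966717440000000000) * w^2 + (-14830634651066089844179968000000000000000) * w^3 + (592075687305451161600000000000000000000) * w^4 + (-20031324963840000000000000000000000000) * w^5.

Lemma V2_shift1 t : 6^5 * V2Z t = V2W1 (6*t - 1).
Proof. unfold V2Z, V2W1. ring. Qed.

Lemma V2_piece1 w : 0 <= w <= 1 -> V2W1 w > 6^5 * 110209891015346049288060631680379399.
Proof. intros Hw. pose proof (powb 1 w 1 Hw). pose proof (powb 2 w 1 Hw). pose proof (powb 3 w 1 Hw). pose proof (powb 4 w 1 Hw). pose proof (powb 5 w 1 Hw). rewrite !pow1 in *. unfold V2W1. lra. Qed.

Definition V2W2 (w : R) : R := (21749352860584201754371009851970198829627904) + (-3477470817599284023238370161771638835200000) * w^1 + (287058454173869515228913062717440000000000) * w^2 + (-12662645151482685197779968000000000000000) * w^3 + (491919062486251161600000000000000000000) * w^4 + (-20031324963840000000000000000000000000) * w^5.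

Lemma V2_shift2 t : 6^5 * V2Z t = V2W2 (6*t - 2).
Proof. unfold V2Z, V2W2. ring. Qed.

Lemma V2_piece2 w : 0 <= w <= 1 -> V2W2 w > 6^5 * 110209891015346049288060631680379399.
Proof. intros Hw. pose proof (powb 1 w 1 Hw). pose proof (powb 2 w 1 Hw). pose proof (powb 3 w 1 Hw). pose proof (powb 4 w 1 Hw). pose proof (powb 5 w 1 Hw). rewrite !pow1 in *. unfold V2W2. lra. Qed.

Lemma V2Z_pos t : 0 <= t <= (1/2) -> V2Z t > 110209891015346049288060631680379399.
Proof. intros Ht.
  destruct (Rle_lt_dec t (1/6)) as [Hk0|Hk0].
  { pose proof (V2_shift0 t) as E. pose proof (V2_piece0 (6*t - 0) ltac:(lra)) as P. lra. }
  destruct (Rle_lt_dec t (2/6)) as [Hk1|Hk1].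
  { pose proof (V2_shift1 t) as E. pose proof (V2_piece1 (6*t - 1) ltac:(lra)) as P. lra. }
  pose proof (V2_shift2 t) as E. pose proof (V2_piece2 (6*t - 2) ltac:(lra)) as P. lra.
Qed.

Lemma V2_pos t p : 0 <= t <= (1/2) -> 31415926535/10000000000 <= p <= 31415926536/10000000000 -> V2I t p > 0.
Proof. intros Ht Hp. pose proof (V2_split t p) as E.
  pose proof (V2Z_pos t Ht) as H0.
  assert (HR : -367366303384486830960202105601264657 <= V2RI t p <= 367366303384486830960202105601264657) by (apply V2_Rbnd; lra).
  assert (He : -(3/10) <= 100000*p - 314159 <= 3/10) by lra.
  set (e := 100000*p - 314159) in *. set (r := V2RI t p) in *.
  assert (H1 : 0 <= (e + 3/10) * (r + 367366303384486830960202105601264657)) by (apply Rmult_le_pos; lra).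
  assert (H2 : 0 <= (3/10 - e) * (367366303384486830960202105601264657 - r)) by (apply Rmult_le_pos; lra).
  assert (Hpos : 0 < 100000^7) by (apply pow_lt; lra).
  set (z := 100000^7) in *. set (q := V2I t p) in *. nra.
Qed.

Definition E1form (t p SI CI : R) : R := p^5*(1*CI^2*SI + 43200*(p-2*t)*CI - 259200*(p-2*t)^2*SI) - 2700*(16*p+16*(10-p^2)*t)*(p-2*t)^5*CI.

Lemma E1_id t p : E1form t p (S1I t) (C1I t) = t^2 * Q1I t p.
Proof. unfold E1form, S1I, C1I, Q1I. ring. Qed.

Definition G2form (t p SI CI : R) : R := 9*(16*p^2+16*p*(10-p^2)*t+96*(10-p^2)*t^2)*(p-2*t)^5*CI - p^6*(2*CI^2*SI + 144*(p-2*t)*CI - 576*(p-2*t)^2*SI).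

Lemma G2_id t p : G2form t p (S2I t) (C2I t) = t^3 * Q2I t p.
Proof. unfold G2form, S2I, C2I, Q2I. ring. Qed.

Lemma V1_id t p : 16*p^5 - (16*p+16*(10-p^2)*t)*(p-2*t)^4 = t * V1I t p.
Proof. unfold V1I. ring. Qed.

Lemma V2_id t p : 16*p^6 - (16*p^2+16*p*(10-p^2)*t+96*(10-p^2)*t^2)*(p-2*t)^4 = t * V2I t p.
Proof. unfold V2I. ring. Qed.

Lemma conv1 t p SI CI : E1form t p SI CI > 0 ->
  p^5*((CI/720)^2*(SI/120) + ((p-2*t)/2)*(CI/720) - 2*((p-2*t)/2)^2*(SI/120))
   - (16*p+16*(10-p^2)*t)*((p-2*t)/2)^5*(CI/720) > 0.
Proof. intros H.
  replace (p^5*((CI/720)^2*(SI/120) + ((p-2*t)/2)*(CI/720) - 2*((p-2*t)/2)^2*(SI/120))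
   - (16*p+16*(10-p^2)*t)*((p-2*t)/2)^5*(CI/720)) with (E1form t p SI CI / 62208000)
   by (unfold E1form; field).
  apply Rdiv_lt_0_compat; lra.
Qed.

Lemma conv2 t p SI CI : G2form t p SI CI > 0 ->
  (16*p^2+16*p*(10-p^2)*t+96*(10-p^2)*t^2)*((p-2*t)/2)^5*(CI/24)
   - p^6*((CI/24)^2*(SI/6) + ((p-2*t)/2)*(CI/24) - 2*((p-2*t)/2)^2*(SI/6)) > 0.
Proof. intros H.
  replace ((16*p^2+16*p*(10-p^2)*t+96*(10-p^2)*t^2)*((p-2*t)/2)^5*(CI/24)
   - p^6*((CI/24)^2*(SI/6) + ((p-2*t)/2)*(CI/24) - 2*((p-2*t)/2)^2*(SI/6))) with (G2form t p SI CI / 6912)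
   by (unfold G2form; field).
  apply Rdiv_lt_0_compat; lra.
Qed.

Lemma S1_eq t : sin_approx t 2 = S1I t / 120.
Proof. unfold sin_approx, sin_term, S1I. simpl. field. Qed.
Lemma S2_eq t : sin_approx t 1 = S2I t / 6.
Proof. unfold sin_approx, sin_term, S2I. simpl. field. Qed.
Lemma C1_eq t : cos_approx t 3 = C1I t / 720.
Proof. unfold cos_approx, cos_term, C1I. simpl. field. Qed.
Lemma C2_eq t : cos_approx t 2 = C2I t / 24.
Proof. unfold cos_approx, cos_term, C2I. simpl. field. Qed.

Lemma abs1 (P5 x s co S C K : R) : 0 < P5 -> s <= S -> 0 <= S -> C <= co -> 0 <= C ->
  co^2 <= 2*x^2 -> 0 <= x*(P5 - K*x^4) ->
  P5*(C^2*S + x*C - 2*x^2*S) - K*x^5*C > 0 ->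
  P5*(co^2*s + x*co - 2*x^2*s) - K*x^5*co > 0.
Proof.
  intros HP Hs HS Hc HC Hx HW HE.
  assert (H1 : 0 <= P5*((S-s)*(2*x^2-co^2))) by
    (apply Rmult_le_pos; [lra|apply Rmult_le_pos; lra]).
  assert (H2 : 0 <= P5*(S*((co-C)*(co+C)))) by
    (apply Rmult_le_pos; [lra|apply Rmult_le_pos; [lra|apply Rmult_le_pos; lra]]).
  assert (H3 : 0 <= (co-C)*(x*(P5 - K*x^4))) by (apply Rmult_le_pos; lra).
  lra.
Qed.

Lemma abs2 (P6 x s co S C K : R) : 0 < P6 -> S <= s -> 0 <= S -> co <= C -> 0 <= co ->
  co^2 <= 2*x^2 -> 0 <= x*(P6 - K*x^4) ->
  K*x^5*C - P6*(C^2*S + x*C - 2*x^2*S) > 0 ->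
  K*x^5*co - P6*(co^2*s + x*co - 2*x^2*s) > 0.
Proof.
  intros HP Hs HS Hc HC Hx HW HE.
  assert (H1 : 0 <= P6*((s-S)*(2*x^2-co^2))) by
    (apply Rmult_le_pos; [lra|apply Rmult_le_pos; lra]).
  assert (H2 : 0 <= P6*(S*((C-co)*(C+co)))) by
    (apply Rmult_le_pos; [lra|apply Rmult_le_pos; [lra|apply Rmult_le_pos; lra]]).
  assert (H3 : 0 <= (C-co)*(x*(P6 - K*x^4))) by (apply Rmult_le_pos; lra).
  lra.
Qed.

Lemma fin1 (p x t s co : R) : 0 < p -> 0 < x -> 0 < s ->
  p^5*(co^2*s + x*co - 2*x^2*s) - (16*p+16*(10-p^2)*t)*x^5*co > 0 ->
  2 + (16/p^4 + (160/p^5 - 16/p^3)*t)*x^3*(co/s) < (co/x)^2 + co/s/x.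
Proof.
  intros Hp Hx Hs H. apply Rminus_gt_0_lt.
  replace ((co/x)^2 + co/s/x - (2 + (16/p^4 + (160/p^5 - 16/p^3)*t)*x^3*(co/s)))
    with ((p^5*(co^2*s + x*co - 2*x^2*s) - (16*p+16*(10-p^2)*t)*x^5*co) / (p^5*x^2*s))
    by (field; lra).
  apply Rdiv_lt_0_compat; [exact H|].
  apply Rmult_lt_0_compat; [apply Rmult_lt_0_compat|]; try apply pow_lt; lra.
Qed.

Lemma fin2 (p x t s co : R) : 0 < p -> 0 < x -> 0 < s ->
  (16*p^2+16*p*(10-p^2)*t+96*(10-p^2)*t^2)*x^5*co - p^6*(co^2*s + x*co - 2*x^2*s) > 0 ->
  (co/x)^2 + co/s/x < 2 + (16/p^4 + ((160/p^5 - 16/p^3)*t + (960/p^6 - 96/p^4)*t^2))*x^3*(co/s).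
Proof.
  intros Hp Hx Hs H. apply Rminus_gt_0_lt.
  replace (2 + (16/p^4 + ((160/p^5 - 16/p^3)*t + (960/p^6 - 96/p^4)*t^2))*x^3*(co/s) - ((co/x)^2 + co/s/x))
    with (((16*p^2+16*p*(10-p^2)*t+96*(10-p^2)*t^2)*x^5*co - p^6*(co^2*s + x*co - 2*x^2*s)) / (p^6*x^2*s))
    by (field; lra).
  apply Rdiv_lt_0_compat; [exact H|].
  apply Rmult_lt_0_compat; [apply Rmult_lt_0_compat|]; try apply pow_lt; lra.
Qed.

Lemma PI_bnd : 31415926535/10000000000 < PI < 31415926536/10000000000.
Proof.
  pose proof (PI_2_3_7_ineq 5) as H.
  assert (E1 : sum_f_R0 (tg_alt PI_2_3_7_tg) (S (2*5)) = 632297025850941845436152644689128956/805065577331938346404699400854927755)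
   by (unfold PI_2_3_7_tg, tg_alt, Ratan_seq; simpl sum_f_R0; simpl INR; field).
  assert (E2 : sum_f_R0 (tg_alt PI_2_3_7_tg) (2*5) = 1309103573191895350523108857702967/1666802437540245023612214080444985)
   by (unfold PI_2_3_7_tg, tg_alt, Ratan_seq; simpl sum_f_R0; simpl INR; field).
  rewrite E1, E2 in H. lra.
Qed.

Theorem theorem2 :
  (forall x : R, PI / 2 - 1 / 3 < x < PI / 2 ->
     2 + (16 / PI ^ 4 + c_fun x) * x ^ 3 * tan x
       < (sin x / x) ^ 2 + tan x / x) /\
  (forall x : R, PI / 2 - 1 / 2 < x < PI / 2 ->
     (sin x / x) ^ 2 + tan x / x
       < 2 + (16 / PI ^ 4 + d_fun x) * x ^ 3 * tan x).
Proof.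
  pose proof PI_bnd as Hpi.
  split.
  - intros x0 Hx0.
    set (t := PI/2 - x0).
    assert (Ht : 0 < t < 1/3) by (unfold t; lra).
    assert (Ex : x0 = (PI - 2*t)/2) by (unfold t; field).
    assert (Esx : sin x0 = cos t) by (unfold t; rewrite cos_shift; reflexivity).
    assert (Ecx : cos x0 = sin t) by (unfold t; rewrite sin_shift; reflexivity).
    unfold c_fun, tan. rewrite Esx, Ecx. fold t.
    assert (Hs : 0 < sin t) by (apply sin_gt_0; lra).
    assert (Hc : 0 < cos t) by (apply cos_gt_0; lra).
    assert (Hc1 : cos t <= 1) by (pose proof (COS_bound t); lra).
    assert (HsS : sin t <= S1I t / 120).
    { rewrite <- S1_eq. apply (sin_bound t 0); lra. }
    assert (HcC : C1I t / 720 <= cos t).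
    { rewrite <- C1_eq. apply (cos_bound t 1); lra. }
    assert (HS0 : 0 <= S1I t / 120).
    { unfold S1I. assert (H5: 0 <= t^5) by (apply pow_le; lra).
      assert (H3: t^3 <= t) by (replace (t^3) with (t*(t*t)) by ring; nra). lra. }
    assert (HC0 : 0 <= C1I t / 720).
    { unfold C1I. assert (H4: 0 <= t^4) by (apply pow_le; lra).
      assert (H6: t^6 <= 1^6) by (apply pow_incr; lra). rewrite pow1 in H6.
      assert (H2: t^2 <= 1/9) by (replace (t^2) with (t*t) by ring; nra). lra. }
    assert (HQ : Q1I t PI > 0) by (apply Q1_pos; lra).
    assert (HV : V1I t PI > 0) by (apply V1_pos; lra).
    assert (HE : PI^5*((C1I t/720)^2*(S1I t/120) + x0*(C1I t/720) - 2*x0^2*(S1I t/120))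
       - (16*PI+16*(10-PI^2)*t)*x0^5*(C1I t/720) > 0).
    { rewrite Ex. apply conv1. rewrite E1_id. apply Rmult_gt_0_compat; [nra | exact HQ]. }
    assert (HW : 0 <= x0 * (PI^5 - (16*PI+16*(10-PI^2)*t)*x0^4)).
    { replace (x0 * (PI^5 - (16*PI+16*(10-PI^2)*t)*x0^4)) with
        ((PI-2*t) * (16*PI^5 - (16*PI+16*(10-PI^2)*t)*(PI-2*t)^4) / 32) by (rewrite Ex; field).
      rewrite V1_id. apply Rmult_le_pos; [|lra].
      apply Rmult_le_pos; [lra | apply Rmult_le_pos; lra]. }
    apply fin1; [lra|lra|exact Hs|].
    apply (abs1 (PI^5) x0 (sin t) (cos t) (S1I t/120) (C1I t/720)); auto.
    + apply pow_lt; lra.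
    + nra.
  - intros x0 Hx0.
    set (t := PI/2 - x0).
    assert (Ht : 0 < t < 1/2) by (unfold t; lra).
    assert (Ex : x0 = (PI - 2*t)/2) by (unfold t; field).
    assert (Esx : sin x0 = cos t) by (unfold t; rewrite cos_shift; reflexivity).
    assert (Ecx : cos x0 = sin t) by (unfold t; rewrite sin_shift; reflexivity).
    unfold d_fun, c_fun, tan. rewrite Esx, Ecx. fold t.
    assert (Hs : 0 < sin t) by (apply sin_gt_0; lra).
    assert (Hc : 0 < cos t) by (apply cos_gt_0; lra).
    assert (Hc1 : cos t <= 1) by (pose proof (COS_bound t); lra).
    assert (HsS : S2I t / 6 <= sin t).
    { rewrite <- S2_eq. apply (sin_bound t 0); lra. }
    assert (HcC : cos t <= C2I t / 24).
    { rewrite <- C2_eq. apply (cos_bound t 0); lra. }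
    assert (HS0 : 0 <= S2I t / 6).
    { unfold S2I.
      assert (H3: t^3 <= t) by (replace (t^3) with (t*(t*t)) by ring; nra). lra. }
    assert (HQ : Q2I t PI > 0) by (apply Q2_pos; lra).
    assert (HV : V2I t PI > 0) by (apply V2_pos; lra).
    assert (HE : (16*PI^2+16*PI*(10-PI^2)*t+96*(10-PI^2)*t^2)*x0^5*(C2I t/24)
       - PI^6*((C2I t/24)^2*(S2I t/6) + x0*(C2I t/24) - 2*x0^2*(S2I t/6)) > 0).
    { rewrite Ex. apply conv2. rewrite G2_id. apply Rmult_gt_0_compat; [apply pow_lt; lra | exact HQ]. }
    assert (HW : 0 <= x0 * (PI^6 - (16*PI^2+16*PI*(10-PI^2)*t+96*(10-PI^2)*t^2)*x0^4)).
    { replace (x0 * (PI^6 - (16*PI^2+16*PI*(10-PI^2)*t+96*(10-PI^2)*t^2)*x0^4)) with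
        ((PI-2*t) * (16*PI^6 - (16*PI^2+16*PI*(10-PI^2)*t+96*(10-PI^2)*t^2)*(PI-2*t)^4) / 32) by (rewrite Ex; field).
      rewrite V2_id. apply Rmult_le_pos; [|lra].
      apply Rmult_le_pos; [lra | apply Rmult_le_pos; lra]. }
    apply fin2; [lra|lra|exact Hs|].
    apply (abs2 (PI^6) x0 (sin t) (cos t) (S2I t/6) (C2I t/24)); auto.
    + apply pow_lt; lra.
    + lra.
    + nra.
Qed.
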